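(* Let $n\ge1$, $k\ge1$, $\mathcal{D}=\{0,\ldots,n\}$, and let $i\in\{0,\ldots,n\}$. Let $\mathbf{c}=\mathbf{W}_i0^{k-1}$ (the word $\mathbf{W}_i$ followed by $k-1$ zeros). Then for every $\mathbf{w}\in\mathcal{D}^k$, $$\#\{1\le j\le k\cdot(n+1)^k:\ c_j\cdots c_{j+k-1}=\mathbf{w}\}=k.$$
   Context: Let $\mathbf{w}_0,\mathbf{w}_1,\ldots,\mathbf{w}_{(n+1)^k-1}$ be the elements of $\mathcal{D}^k$ listed in strictly increasing lexicographic order (so $\mathbf{w}_0=0^k$, $\mathbf{w}_1=0^{k-1}1$, \ldots, $\mathbf{w}_{(n+1)^k-1}=n^k$). For $i=0,\ldots,n$ define the word (concatenation) $\mathbf{W}_i=\mathbf{w}_i\mathbf{w}_{i+1}\cdots\mathbf{w}_{(n+1)^k-1}\mathbf{w}_0\mathbf{w}_1\cdots\mathbf{w}_{i-1}$, a word of length $k\cdot(n+1)^k$ (with $\mathbf{W}_0=\mathbf{w}_0\mathbf{w}_1\cdots\mathbf{w}_{(n+1)^k-1}$). *)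

(* Defs.v *)
From mathcomp Require Import all_boot.
Set Implicit Arguments. Unset Strict Implicit. Unset Printing Implicit Defensive.

(* Words over the alphabet D = {0,...,n} are represented as [seq nat]
   with all letters <= n. *)

Fixpoint lexlt (s t : seq nat) : bool :=
  match s, t with
  | [::], [::] => false
  | [::], _ :: _ => true
  | _ :: _, [::] => false
  | a :: s', b :: t' => (a < b) || ((a == b) && lexlt s' t')
  end.

Definition inDk (n k : nat) (w : seq nat) : bool :=
  (size w == k) && all (fun a => a <= n) w.

(* W_i = w_i w_{i+1} ... w_{N-1} w_0 ... w_{i-1}, for ws = [:: w_0; ...; w_{N-1}] *)
Definition bigW (ws : seq (seq nat)) (i : nat) : seq nat := flatten (rot i ws).

(* The factor c_j ... c_{j+k-1} of c, with j 1-based. *)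
Definition factor (c : seq nat) (k j : nat) : seq nat := take k (drop j.-1 c).

(* Main.v *)
Require Import Defs.
From mathcomp Require Import all_boot zify.
Set Implicit Arguments. Unset Strict Implicit. Unset Printing Implicit Defensive.

Fixpoint enc (B k m : nat) : seq nat :=
  if k is k'.+1 then (m %/ B ^ k') %% B :: enc B k' m else [::].
Fixpoint dec (B : nat) (s : seq nat) : nat :=
  if s is a :: s' then a * B ^ (size s') + dec B s' else 0.

Lemma size_enc B k m : size (enc B k m) = k.
Proof. by elim: k => //= k ->. Qed.

Lemma nth_enc B k m e : e < k -> nth 0 (enc B k m) e = (m %/ B ^ (k.-1 - e)) %% B.
Proof.
elim: k e => [|k IH] [|e] //= He; first by rewrite subn0.
rewrite IH //; congr (_ %/ B ^ _ %% B); lia.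
Qed.

Lemma digit_split B k m : m %% B ^ k.+1 = ((m %/ B ^ k) %% B) * B ^ k + m %% B ^ k.
Proof.
rewrite expnS (divn_eq (m %% (B * B ^ k)) (B ^ k)) -modn_divl.
by rewrite (modn_dvdm m (dvdn_mull B (dvdnn (B ^ k)))).
Qed.

Lemma enc_mod B k m : 0 < B -> enc B k (m %% B ^ k) = enc B k m.
Proof.
move=> hB; elim: k m => [|k IH] m //=; congr (_ :: _).
  have hP : 0 < B ^ k by rewrite expn_gt0 hB.
  by rewrite digit_split divnMDl // (divn_small (ltn_pmod _ hP)) addn0 modn_mod.
rewrite -(IH (m %% B ^ k.+1)) -[RHS]IH; congr (enc _ _ _).
by rewrite (modn_dvdm m (dvdn_exp2l B (leqnSn k))).
Qed.

Lemma dec_enc B k m : 0 < B -> dec B (enc B k m) = m %% B ^ k.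
Proof.
move=> hB; elim: k => [|k IH] /=; first by rewrite expn0 modn1.
by rewrite size_enc IH digit_split.
Qed.

Lemma enc_digits B k m : 0 < B -> all (fun a => a < B) (enc B k m).
Proof. by move=> hB; elim: k => //= k ->; rewrite ltn_pmod. Qed.

Lemma dec_lt B s : all (fun a => a < B) s -> dec B s < B ^ size s.
Proof.
elim: s => [|a s IH] /=; first by rewrite expn0.
case/andP => ha hs; have := IH hs; rewrite expnS.
move: (B ^ size s) (dec B s) => P d hd.
have : a.+1 * P <= B * P by rewrite leq_mul2r ha orbT.
rewrite mulSn.
lia.
Qed.

Lemma enc_dec B s : 0 < B -> all (fun a => a < B) s -> enc B (size s) (dec B s) = s.
Proof.
move=> hB; elim: s => [|a s IH] //= /andP [ha hs].
have hd := dec_lt hs.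
congr (_ :: _).
  by rewrite divnMDl ?expn_gt0 ?hB // divn_small // addn0 modn_small.
by rewrite -enc_mod // modnMDl modn_small // IH.
Qed.

Lemma lex_enc B k m m' : 0 < B -> m %% B ^ k < m' %% B ^ k -> lexlt (enc B k m) (enc B k m').
Proof.
move=> hB; elim: k m m' => [|k IH] m m' /=; first by rewrite expn0 !modn1.
rewrite !digit_split.
have hP : 0 < B ^ k by rewrite expn_gt0 hB.
have h1 := ltn_pmod m hP; have h2 := ltn_pmod m' hP.
move: ((m %/ B ^ k) %% B) ((m' %/ B ^ k) %% B) => a a' H.
case: (ltngtP a a') => Ha //=.
  exfalso. have : (a' + 1) * B ^ k <= a * B ^ k by rewrite leq_mul2r addn1 Ha orbT.
  lia.
rewrite IH //. rewrite Ha in H. lia.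
Qed.
Lemma lexlt_irr : irreflexive lexlt.
Proof. by elim=> //= a s IH; rewrite ltnn eqxx IH. Qed.

Lemma lexlt_trans : transitive lexlt.
Proof.
move=> t s u; elim: s t u => [|a s IH] [|b t] [|c u] //=.
case/orP => [hab | /andP [/eqP <- hst]]; case/orP => [hbc | /andP [/eqP <- htu]].
- by rewrite (ltn_trans hab hbc).
- by rewrite hab.
- by rewrite hbc.
- by rewrite eqxx (IH _ _ hst htu) orbT.
Qed.

Lemma mem_encs n k w : (w \in map (enc n.+1 k) (iota 0 (n.+1 ^ k))) = inDk n k w.
Proof.
apply/mapP/idP => [[m _ ->] | hw].
  by rewrite /inDk size_enc eqxx /= (enc_digits k m (ltn0Sn n)).
case/andP: hw => /eqP hs ha.
have ha' : all (fun a => a < n.+1) w by [].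
exists (dec n.+1 w); last by rewrite -hs enc_dec.
by rewrite mem_iota add0n /= -hs dec_lt.
Qed.

Lemma ws_eq n k (ws : seq (seq nat)) :
  sorted lexlt ws -> (forall w, w \in ws = inDk n k w) ->
  ws = map (enc n.+1 k) (iota 0 (n.+1 ^ k)).
Proof.
move=> Hs Hmem; apply: (irr_sorted_eq lexlt_trans lexlt_irr) => //.
  apply: (homo_sorted_in (e := ltn) (P := mem (iota 0 (n.+1 ^ k)))).
  move=> x y; rewrite !mem_iota /= !add0n => hx hy hxy.
  by apply: lex_enc => //; rewrite !modn_small.
  by apply/allP.
have := iota_ltn_sorted 0 (n.+1 ^ k); exact: id.
by move=> w; rewrite Hmem mem_encs.
Qed.
Lemma size_flatten_enc B k s : size (flatten (map (enc B k) s)) = k * size s.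
Proof. by elim: s => [|a s IH] /=; rewrite ?muln0 // size_cat size_enc IH mulnS. Qed.

Lemma nth_flatten_enc B k s p : p < k * size s ->
  nth 0 (flatten (map (enc B k) s)) p = nth 0 (enc B k (nth 0 s (p %/ k))) (p %% k).
Proof.
elim: s p => [|a s IH] p /=; first by rewrite muln0.
move=> Hp; rewrite nth_cat size_enc; case: ltnP => Hpk.
  by rewrite divn_small // modn_small.
have hk : 0 < k by lia.
rewrite mulnS in Hp.
have [p' Ep] : exists p', p = k + p' by exists (p - k); lia.
subst p; rewrite addKn IH; last by lia.
have -> : k + p' = 1 * k + p' by rewrite mul1n.
by rewrite divnMDl // modnMDl.
Qed.

Lemma nth_rot_iota N i q : i <= N -> q < N -> nth 0 (rot i (iota 0 N)) q = (q + i) %% N.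
Proof.
move=> hi hq; rewrite /rot drop_iota take_iota nth_cat size_iota.
case: ltnP => h.
  by rewrite nth_iota // modn_small; lia.
rewrite nth_iota; last by rewrite (minn_idPl hi); lia.
have -> : q + i = (q - (N - i)) + N by lia.
by rewrite modnDr modn_small; lia.
Qed.

Definition L n k x := nth 0 (enc n.+1 k ((x %/ k) %% (n.+1 ^ k))) (x %% k).

Lemma L_period n k x : 0 < k -> L n k (x + k * n.+1 ^ k) = L n k x.
Proof.
move=> hk; rewrite /L mulnC divnDMl // modnDr; congr (nth _ (enc _ _ _) _).
by rewrite addnC modnMDl.
Qed.
Lemma B_le_N n k : 0 < k -> n.+1 <= n.+1 ^ k.
Proof. by move=> hk; rewrite -{1}(expn1 n.+1) leq_pexp2l. Qed.

Lemma c_nth n k i p : 0 < k -> i <= n -> p < k * n.+1 ^ k + k.-1 ->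
  nth 0 (flatten (rot i (map (enc n.+1 k) (iota 0 (n.+1 ^ k)))) ++ nseq k.-1 0) p
  = L n k (p + i * k).
Proof.
move=> hk hi hp; have hBN := B_le_N n hk.
rewrite /L; set N := n.+1 ^ k in hBN hp *.
rewrite -map_rot nth_cat size_flatten_enc size_rot size_iota.
case: ltnP => h.
  rewrite nth_flatten_enc ?size_rot ?size_iota // nth_rot_iota; last first.
  - by rewrite ltn_divLR // mulnC.
  - lia.
  rewrite (addnC p) divnMDl // modnMDl; congr (nth _ (enc _ _ (_ %% _)) _).
  by rewrite addnC.
rewrite nth_nseq; case: ifP => he; last by lia.
have [e [Ep he']] : exists e, p = k * N + e /\ e < k.-1 by exists (p - k * N); lia.
subst p.
have -> : k * N + e + i * k = (N + i) * k + e by rewrite mulnDl; lia.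
rewrite divnMDl // (divn_small (_ : e < k)); last by lia.
rewrite addn0 modnDl modn_small; last by lia.
rewrite modnMDl modn_small; last by lia.
rewrite nth_enc; last by lia.
rewrite divn_small ?mod0n //.
apply: (leq_trans (_ : i < n.+1)) => //.
rewrite -{1}(expn1 n.+1) leq_pexp2l //; lia.
Qed.
Lemma take_drop_mkseq (c : seq nat) k p : p + k <= size c ->
  take k (drop p c) = mkseq (fun t => nth 0 c (p + t)) k.
Proof.
move=> h; apply: (@eq_from_nth _ 0).
  by rewrite size_mkseq size_takel // size_drop; lia.
move=> t; rewrite size_takel ?size_drop; last by lia.
by move=> ht; rewrite nth_take // nth_drop nth_mkseq.
Qed.

Lemma count_shift (G : pred nat) M s : (forall x, G (x + M) = G x) ->
  count (fun x => G (x + s)) (iota 0 M) = count G (iota 0 M).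
Proof.
move=> hG; elim: s => [|s IH]; first by apply: eq_count => x; rewrite addn0.
have E : count (fun x => G (x + s.+1)) (iota 0 M) = count (fun x => G (x + s)) (iota 1 M).
  by rewrite (iotaDl 1 0) count_map; apply: eq_count => x /=; rewrite add1n addSn addnS.
rewrite E -IH.
have := congr1 (count (fun x => G (x + s))) (iotaD 0 M 1).
rewrite addn1 /= count_cat /= add0n addn0 (addnC M) hG; lia.
Qed.

Lemma count_iota_block (P : pred nat) m k : count P (iota m k) = \sum_(r < k) P (m + r).
Proof.
elim: k => [|k IH]; first by rewrite big_ord0.
rewrite big_ord_recr -IH.
have -> : iota m k.+1 = iota m k ++ [:: m + k] by rewrite -addn1 iotaD.
by rewrite count_cat /= addn0.
Qed.

Lemma count_blocks (P : pred nat) k N :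
  count P (iota 0 (k * N)) = \sum_(r < k) count (fun q => P (q * k + r)) (iota 0 N).
Proof.
elim: N => [|N IH]; first by rewrite muln0 /=; rewrite big1.
rewrite mulnS addnC iotaD count_cat IH count_iota_block add0n -big_split.
apply: eq_bigr => r _.
have -> : iota 0 N.+1 = iota 0 N ++ [:: N] by rewrite -addn1 iotaD.
by rewrite count_cat /= addn0 mulnC.
Qed.
Definition f n k r q := mkseq (fun t => L n k (q * k + r + t)) k.

Lemma f_cat n k r q : r < k -> q < n.+1 ^ k ->
  f n k r q = enc n.+1 (k - r) q ++ enc n.+1 r (((q + 1) %% n.+1 ^ k) %/ n.+1 ^ (k - r)).
Proof.
move=> hr hq; apply: (@eq_from_nth _ 0).
  by rewrite size_mkseq size_cat !size_enc; lia.
rewrite size_mkseq => t ht.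
rewrite nth_mkseq // nth_cat size_enc /L.
have hk : 0 < k by lia.
case: ltnP => h.
  rewrite -addnA divnMDl // (divn_small (_ : r + t < k)); last by lia.
  rewrite addn0 modnMDl modn_small // modn_small; last by lia.
  rewrite (nth_enc _ _ (_ : r + t < k)); last by lia.
  rewrite (nth_enc _ _ (_ : t < k - r)) //.
  congr (_ %/ _ ^ _ %% _); lia.
have -> : q * k + r + t = (q + 1) * k + (r + t - k) by rewrite mulnDl; lia.
rewrite divnMDl // (divn_small (_ : r + t - k < k)); last by lia.
rewrite addn0 modnMDl (modn_small (_ : r + t - k < k)); last by lia.
rewrite (nth_enc _ _ (_ : r + t - k < k)); last by lia.
rewrite (nth_enc _ _ (_ : t - (k - r) < r)); last by lia.
rewrite -divnMA -expnD; congr (_ %/ _ ^ _ %% _); lia.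
Qed.


Lemma f_inj n k r q q' : r < k -> q < n.+1 ^ k -> q' < n.+1 ^ k ->
  f n k r q = f n k r q' -> q = q'.
Proof.
move=> hr hq hq'; rewrite !f_cat // => /eqP; rewrite eqseq_cat ?size_enc //.
case/andP => /eqP E1 /eqP E2.
have H1 := congr1 (dec n.+1) E1; rewrite !dec_enc // in H1.
have H2 := congr1 (dec n.+1) E2; rewrite !dec_enc // in H2.
have hN : n.+1 ^ k = n.+1 ^ (k - r) * n.+1 ^ r by rewrite -expnD subnK // ltnW.
have hP : 0 < n.+1 ^ k by rewrite expn_gt0.
have hlt : forall x, (x %% n.+1 ^ k) %/ n.+1 ^ (k - r) < n.+1 ^ r.
  by move=> x; rewrite ltn_divLR ?expn_gt0 // mulnC -hN ltn_pmod.
rewrite !(modn_small (hlt _)) in H2.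
have hd : n.+1 ^ (k - r) %| n.+1 ^ k by rewrite hN dvdn_mulr.
have H3 : (q + 1) %% n.+1 ^ k = (q' + 1) %% n.+1 ^ k.
  rewrite (divn_eq ((q + 1) %% n.+1 ^ k) (n.+1 ^ (k - r))) H2.
  rewrite [in RHS](divn_eq ((q' + 1) %% n.+1 ^ k) (n.+1 ^ (k - r))).
  congr (_ + _).
  rewrite !(modn_dvdm _ hd).
  by rewrite -modnDml H1 modnDml.
by move/eqP: H3; rewrite eqn_modDr (modn_small hq) (modn_small hq') => /eqP.
Qed.
Lemma slice_count n k r w : r < k -> inDk n k w ->
  count (fun q => f n k r q == w) (iota 0 (n.+1 ^ k)) = 1.
Proof.
move=> hr hw.
have -> : count (fun q => f n k r q == w) (iota 0 (n.+1 ^ k))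
   = count (pred1 w) (map (f n k r) (iota 0 (n.+1 ^ k))) by rewrite count_map.
have hu : uniq (map (f n k r) (iota 0 (n.+1 ^ k))).
  rewrite map_inj_in_uniq ?iota_uniq // => x y; rewrite !mem_iota !add0n /=.
  exact: f_inj.
rewrite (count_uniq_mem _ hu).
have hsub : {subset map (f n k r) (iota 0 (n.+1 ^ k)) <= map (enc n.+1 k) (iota 0 (n.+1 ^ k))}.
  move=> x /mapP [q]; rewrite mem_iota add0n /= => hq ->.
  rewrite mem_encs (f_cat hr hq) /inDk size_cat !size_enc (subnK (ltnW hr)) eqxx andTb.
  by rewrite all_cat !(enc_digits _ _ (ltn0Sn n)).
have hsz : size (map (enc n.+1 k) (iota 0 (n.+1 ^ k))) <= size (map (f n k r) (iota 0 (n.+1 ^ k))).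
  by rewrite !size_map.
have [_ E] := uniq_min_size hu hsub hsz.
by rewrite E mem_encs hw.
Qed.

Theorem lemma2p1 (n k i : nat) (ws : seq (seq nat)) :
  1 <= n -> 1 <= k -> i <= n ->
  sorted lexlt ws ->
  (forall w, w \in ws = inDk n k w) ->
  let c := bigW ws i ++ nseq k.-1 0 in
  forall w, inDk n k w ->
    count (fun j => factor c k j == w) (iota 1 (k * (n.+1 ^ k))) = k.
Proof.
move=> hn hk hi Hs Hmem c w Hw.
have Hws := ws_eq Hs Hmem.
rewrite /c /bigW /factor Hws.
set G := fun x => mkseq (fun t => L n k (x + t)) k == w.
rewrite (iotaDl 1 0) count_map.
rewrite (@eq_in_count _ _ (fun p => G (p + i * k))); last first.
  move=> p; rewrite mem_iota add0n /= => hp.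
  rewrite add0n take_drop_mkseq; last first.
    by rewrite -map_rot size_cat size_flatten_enc size_rot size_iota size_nseq; lia.
  rewrite /G; congr (_ == _).
  apply: (@eq_from_nth _ 0); rewrite ?size_mkseq // => t ht.
  rewrite !nth_mkseq // c_nth //; first by congr (L n k _); lia.
  lia.
rewrite count_shift; last first.
  move=> x; rewrite /G; congr (_ == _); apply: eq_mkseq => t.
  by rewrite addnAC L_period.
rewrite count_blocks.
rewrite (eq_bigr (fun _ => 1)); last first.
  move=> r _; rewrite /G; exact: (slice_count (ltn_ord r) Hw).
by rewrite sum1_card card_ord.
Qed.
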